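(* Let $m\ge3$, $\rho=\frac12+\frac1m$, $0<\delta\le\frac\pi{m+2}$. For $x\ge0$ put $Q(x)=x^m+P(x)+\lambda$, $g=\frac{Q'(x)}{8Q(x)^{3/2}}$, $h=\frac{Q'(x)}{4Q(x)}$ and $$\begin{pmatrix}s_{11}&s_{12}\\ s_{21}&s_{22}\end{pmatrix}=\frac1{1+g^2}\begin{pmatrix}hg-g'g&-hg^2+g'\\ -hg^2-g'&-hg-g'g\end{pmatrix},$$ where $'$ denotes $d/dx$ and $Q^{3/2}$ uses the principal branch. Then for $j,k\in\{1,2\}$, $$\int_0^\infty|s_{jk}(x,\lambda)|\,dx=O\bigl(|\lambda|^{-\rho}\bigr)$$ as $\lambda\to\infty$ in $|\arg\lambda|\le\pi-\delta$, uniformly for $a$ in any compact subset of $\mathbb C^m$.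
   Context: $a=(a_1,\dots,a_m)\in\mathbb C^m$ and $P(x)=a_1x^{m-1}+\dots+a_m$. *)

(* Defs.v *)
From Stdlib Require Import Reals List.
Import ListNotations.
Open Scope R_scope.

Definition Cx := (R * R)%type.
Definition RtoC (r : R) : Cx := (r, 0).
Definition Cadd (z w : Cx) : Cx := (fst z + fst w, snd z + snd w).
Definition Copp (z : Cx) : Cx := (- fst z, - snd z).
Definition Csub (z w : Cx) : Cx := Cadd z (Copp w).
Definition Cmul (z w : Cx) : Cx :=
  (fst z * fst w - snd z * snd w, fst z * snd w + snd z * fst w).
Definition Cnorm (z : Cx) : R := sqrt (fst z ^ 2 + snd z ^ 2).
Definition Cinv (z : Cx) : Cx :=
  let n2 := fst z ^ 2 + snd z ^ 2 in (fst z / n2, - snd z / n2).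
Definition Cdiv (z w : Cx) : Cx := Cmul z (Cinv w).

(* principal argument, with values in (-PI, PI] (0 at z = 0) *)
Definition Carg (z : Cx) : R :=
  let x := fst z in let y := snd z in
  if Rlt_dec 0 x then atan (y / x)
  else if Rlt_dec x 0 then
    (if Rle_dec 0 y then atan (y / x) + PI else atan (y / x) - PI)
  else if Rlt_dec 0 y then PI / 2
  else if Rlt_dec y 0 then - (PI / 2) else 0.

(* principal branch of z^(3/2) = |z|^(3/2) e^{i (3/2) arg z}; 0^(3/2) = 0 *)
Definition Cpow32 (z : Cx) : Cx :=
  if Req_EM_T (Cnorm z) 0 then (0, 0)
  else let r := Rpower (Cnorm z) (3 / 2) in
       let t := 3 / 2 * Carg z in (r * cos t, r * sin t).

(* P(x) = a_1 x^(m-1) + ... + a_m  (only a 1, ..., a m are used) *)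
Definition polyP (m : nat) (a : nat -> Cx) (x : R) : Cx :=
  fold_right (fun i acc => Cadd (Cmul (a (S i)) (RtoC (x ^ (m - S i)))) acc)
             (0, 0) (seq 0 m).

Definition Qfun (m : nat) (a : nat -> Cx) (lam : Cx) (x : R) : Cx :=
  Cadd (RtoC (x ^ m)) (Cadd (polyP m a x) lam).

Definition dQfun (m : nat) (a : nat -> Cx) (x : R) : Cx :=
  Cadd (RtoC (INR m * x ^ (m - 1)))
       (fold_right (fun i acc =>
           Cadd (Cmul (a (S i)) (RtoC (INR (m - S i) * x ^ (m - S i - 1)))) acc)
        (0, 0) (seq 0 m)).

Definition gfun (m : nat) (a : nat -> Cx) (lam : Cx) (x : R) : Cx :=
  Cdiv (dQfun m a x) (Cmul (RtoC 8) (Cpow32 (Qfun m a lam x))).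
Definition hfun (m : nat) (a : nat -> Cx) (lam : Cx) (x : R) : Cx :=
  Cdiv (dQfun m a x) (Cmul (RtoC 4) (Qfun m a lam x)).

Definition has_Cderiv (f : R -> Cx) (x : R) (d : Cx) : Prop :=
  derivable_pt_lim (fun t => fst (f t)) x (fst d) /\
  derivable_pt_lim (fun t => snd (f t)) x (snd d).

(* entries s_jk, given dg = g' *)
Definition sfun (m : nat) (a : nat -> Cx) (lam : Cx) (dg : R -> Cx)
    (j k : nat) (x : R) : Cx :=
  let g := gfun m a lam x in
  let h := hfun m a lam x in
  let gp := dg x in
  let den := Cadd (RtoC 1) (Cmul g g) in
  match j, k with
  | 1%nat, 1%nat => Cdiv (Csub (Cmul h g) (Cmul gp g)) den
  | 1%nat, 2%nat => Cdiv (Cadd (Copp (Cmul h (Cmul g g))) gp) den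
  | 2%nat, 1%nat => Cdiv (Csub (Copp (Cmul h (Cmul g g))) gp) den
  | _, _ => Cdiv (Csub (Copp (Cmul h g)) (Cmul gp g)) den
  end.

(* Main.v *)
Require Import Defs.
From Stdlib Require Import Reals List Lra Lia Psatz Rtrigo_facts.
Open Scope R_scope.

Lemma Cx_eq (z w : Cx) : fst z = fst w -> snd z = snd w -> z = w.
Proof. destruct z, w; simpl; intros; subst; reflexivity. Qed.

Lemma Cnorm_ge0 z : 0 <= Cnorm z.
Proof. apply sqrt_pos. Qed.

Lemma Cnorm_sq z : Cnorm z * Cnorm z = fst z ^ 2 + snd z ^ 2.
Proof. unfold Cnorm. apply sqrt_sqrt. nra. Qed.

Lemma Cnorm_fst z : Rabs (fst z) <= Cnorm z.
Proof.
  pose proof (Cnorm_sq z). pose proof (Cnorm_ge0 z).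
  unfold Rabs; destruct (Rcase_abs (fst z)); nra.
Qed.

Lemma Cnorm_snd z : Rabs (snd z) <= Cnorm z.
Proof.
  pose proof (Cnorm_sq z). pose proof (Cnorm_ge0 z).
  unfold Rabs; destruct (Rcase_abs (snd z)); nra.
Qed.

Lemma Cnorm_unique z r : 0 <= r -> r * r = fst z ^ 2 + snd z ^ 2 -> Cnorm z = r.
Proof.
  intros H1 H2. unfold Cnorm. rewrite <- H2. apply sqrt_square. lra.
Qed.

Lemma Cnorm_mul z w : Cnorm (Cmul z w) = Cnorm z * Cnorm w.
Proof.
  apply Cnorm_unique.
  - apply Rmult_le_pos; apply Cnorm_ge0.
  - replace (Cnorm z * Cnorm w * (Cnorm z * Cnorm w)) with
      ((Cnorm z * Cnorm z) * (Cnorm w * Cnorm w)) by ring.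
    rewrite !Cnorm_sq. unfold Cmul; simpl. ring.
Qed.

Lemma Cnorm_RtoC r : Cnorm (RtoC r) = Rabs r.
Proof.
  apply Cnorm_unique. apply Rabs_pos. unfold RtoC; simpl.
  rewrite <- Rabs_mult. rewrite Rabs_pos_eq by nra. ring.
Qed.

Lemma Cnorm_opp z : Cnorm (Copp z) = Cnorm z.
Proof.
  apply Cnorm_unique. apply Cnorm_ge0. rewrite Cnorm_sq. unfold Copp; simpl. ring.
Qed.

Lemma Cnorm_add z w : Cnorm (Cadd z w) <= Cnorm z + Cnorm w.
Proof.
  pose proof (Cnorm_sq z). pose proof (Cnorm_sq w).
  pose proof (Cnorm_ge0 z). pose proof (Cnorm_ge0 w).
  pose proof (Cnorm_sq (Cadd z w)). pose proof (Cnorm_ge0 (Cadd z w)).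
  destruct z as [x1 y1]; destruct w as [x2 y2]; unfold Cadd in *; simpl in *.
  set (a := Cnorm (x1, y1)) in *. set (b := Cnorm (x2, y2)) in *.
  set (c := Cnorm (x1 + x2, y1 + y2)) in *.
  assert (HCS : x1 * x2 + y1 * y2 <= a * b).
  { destruct (Rle_dec (x1 * x2 + y1 * y2) 0). nra.
    apply Rsqr_incr_0_var; unfold Rsqr; [|nra].
    replace (a * b * (a * b)) with ((a*a)*(b*b)) by ring. rewrite H, H0.
    assert (E: (x1^2+y1^2)*(x2^2+y2^2) - (x1*x2+y1*y2)*(x1*x2+y1*y2) = (x1*y2-x2*y1)^2) by ring. pose proof (pow2_ge_0 (x1*y2-x2*y1)). lra. }
  apply Rsqr_incr_0_var; unfold Rsqr; nra.
Qed.

Lemma Cnorm_sub z w : Cnorm (Csub z w) <= Cnorm z + Cnorm w.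
Proof. unfold Csub. rewrite <- (Cnorm_opp w). apply Cnorm_add. Qed.

Lemma Cnorm_add_ge z w : Cnorm z - Cnorm w <= Cnorm (Cadd z w).
Proof.
  assert (E : z = Cadd (Cadd z w) (Copp w)).
  { apply Cx_eq; unfold Cadd, Copp; simpl; ring. }
  pose proof (Cnorm_add (Cadd z w) (Copp w)). rewrite <- E, Cnorm_opp in H. lra.
Qed.

Lemma Cnorm_zero z : Cnorm z = 0 -> z = (0,0).
Proof.
  intro H. pose proof (Cnorm_sq z). rewrite H in H0.
  destruct z; simpl in *. f_equal; nra.
Qed.

Lemma Cnorm_pos z : z <> (0,0) -> 0 < Cnorm z.
Proof.
  intro H. destruct (Cnorm_ge0 z) as [h|h]; auto. symmetry in h.
  apply Cnorm_zero in h. contradiction.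
Qed.

Lemma n2_pos z : 0 < Cnorm z -> 0 < fst z ^ 2 + snd z ^ 2.
Proof. intro H. rewrite <- Cnorm_sq. nra. Qed.

Lemma Cnorm_inv z : 0 < Cnorm z -> Cnorm (Cinv z) = / Cnorm z.
Proof.
  intro H. pose proof (Cnorm_sq z). pose proof (n2_pos z H).
  apply Cnorm_unique. left; apply Rinv_0_lt_compat; auto.
  unfold Cinv; cbv zeta; cbn [fst snd]. rewrite <- H0. replace ((fst z / (Cnorm z * Cnorm z)) ^ 2 + (- snd z / (Cnorm z * Cnorm z)) ^ 2) with ((fst z ^ 2 + snd z ^ 2) / (Cnorm z * Cnorm z)^2) by (field; lra). rewrite <- H0. field. lra.
Qed.

Lemma Cnorm_div z w : 0 < Cnorm w -> Cnorm (Cdiv z w) = Cnorm z / Cnorm w.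
Proof. intro H. unfold Cdiv. rewrite Cnorm_mul, Cnorm_inv; auto. Qed.

Lemma Cmul_inv z : 0 < Cnorm z -> Cmul z (Cinv z) = (1, 0).
Proof.
  intro H. pose proof (n2_pos z H). apply Cx_eq; unfold Cmul, Cinv; simpl; field; lra.
Qed.

Lemma dlim_eq f x l l' : derivable_pt_lim f x l -> l = l' -> derivable_pt_lim f x l'.
Proof. intros; subst; auto. Qed.

Lemma dl_mult f g x lf lg : derivable_pt_lim f x lf -> derivable_pt_lim g x lg ->
  derivable_pt_lim (fun t => f t * g t) x (lf * g x + f x * lg).
Proof. intros. apply (derivable_pt_lim_mult f g); auto. Qed.
Lemma dl_plus f g x lf lg : derivable_pt_lim f x lf -> derivable_pt_lim g x lg ->
  derivable_pt_lim (fun t => f t + g t) x (lf + lg).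
Proof. intros. apply (derivable_pt_lim_plus f g); auto. Qed.
Lemma dl_minus f g x lf lg : derivable_pt_lim f x lf -> derivable_pt_lim g x lg ->
  derivable_pt_lim (fun t => f t - g t) x (lf - lg).
Proof. intros. apply (derivable_pt_lim_minus f g); auto. Qed.
Lemma dl_opp f x lf : derivable_pt_lim f x lf ->
  derivable_pt_lim (fun t => - f t) x (- lf).
Proof. intros. apply (derivable_pt_lim_opp f); auto. Qed.
Lemma dl_const c x : derivable_pt_lim (fun _ => c) x 0.
Proof. apply (derivable_pt_lim_const c). Qed.
Lemma dl_div f g x lf lg : derivable_pt_lim f x lf -> derivable_pt_lim g x lg -> g x <> 0 ->
  derivable_pt_lim (fun t => f t / g t) x ((lf * g x - lg * f x) / (g x * g x)).
Proof. intros. apply (derivable_pt_lim_div f g); auto. Qed.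
Lemma dl_pow2 f x lf : derivable_pt_lim f x lf ->
  derivable_pt_lim (fun t => f t ^ 2) x (2 * f x * lf).
Proof.
  intros. eapply dlim_eq. eapply derivable_pt_lim_ext.
  2: apply (dl_mult f f); eauto. intro; simpl; ring. simpl; ring.
Qed.
Lemma dl_sqrt f x lf : derivable_pt_lim f x lf -> 0 < f x ->
  derivable_pt_lim (fun t => sqrt (f t)) x (lf / (2 * sqrt (f x))).
Proof.
  intros. eapply dlim_eq.
  apply (derivable_pt_lim_comp f sqrt); eauto. apply derivable_pt_lim_sqrt; auto.
  unfold Rdiv; ring.
Qed.

Lemma Cd_ext f g x d : (forall t, f t = g t) -> has_Cderiv f x d -> has_Cderiv g x d.
Proof.
  intros E [H1 H2]; split; eapply derivable_pt_lim_ext; eauto; intro; simpl; rewrite E; auto.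
Qed.

Lemma Cd_loc f g x d a b : a < x < b -> (forall t, a < t < b -> f t = g t) ->
  has_Cderiv f x d -> has_Cderiv g x d.
Proof.
  intros Hx E [H1 H2]; split; eapply derivable_pt_lim_locally_ext; eauto;
  intros; simpl; rewrite E; auto.
Qed.

Lemma Cd_eq f x d d' : has_Cderiv f x d -> d = d' -> has_Cderiv f x d'.
Proof. intros; subst; auto. Qed.

Lemma Cd_add f g x df dg : has_Cderiv f x df -> has_Cderiv g x dg ->
  has_Cderiv (fun t => Cadd (f t) (g t)) x (Cadd df dg).
Proof.
  intros [A1 A2] [B1 B2]; split; unfold Cadd; cbn [fst snd].
  apply (dl_plus (fun t => fst (f t)) (fun t => fst (g t))); auto.
  apply (dl_plus (fun t => snd (f t)) (fun t => snd (g t))); auto.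
Qed.

Lemma Cd_opp f x df : has_Cderiv f x df ->
  has_Cderiv (fun t => Copp (f t)) x (Copp df).
Proof.
  intros [A1 A2]; split; unfold Copp; cbn [fst snd].
  apply (dl_opp (fun t => fst (f t))); auto.
  apply (dl_opp (fun t => snd (f t))); auto.
Qed.

Lemma Cd_sub f g x df dg : has_Cderiv f x df -> has_Cderiv g x dg ->
  has_Cderiv (fun t => Csub (f t) (g t)) x (Csub df dg).
Proof. intros. unfold Csub. apply Cd_add; auto. apply Cd_opp; auto. Qed.

Lemma Cd_const c x : has_Cderiv (fun _ => c) x (0,0).
Proof. split; apply dl_const. Qed.

Lemma Cd_RtoC r x l : derivable_pt_lim r x l -> has_Cderiv (fun t => RtoC (r t)) x (RtoC l).
Proof. intros; split; unfold RtoC; cbn [fst snd]; auto. apply dl_const. Qed.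

Lemma Cd_mul f g x df dg : has_Cderiv f x df -> has_Cderiv g x dg ->
  has_Cderiv (fun t => Cmul (f t) (g t)) x (Cadd (Cmul df (g x)) (Cmul (f x) dg)).
Proof.
  intros [A1 A2] [B1 B2]; split; unfold Cmul, Cadd; cbn [fst snd].
  - eapply dlim_eq.
    apply (dl_minus (fun t => fst (f t) * fst (g t)) (fun t => snd (f t) * snd (g t)));
    [apply (dl_mult (fun t => fst (f t)) (fun t => fst (g t))); eauto
    |apply (dl_mult (fun t => snd (f t)) (fun t => snd (g t))); eauto]. ring.
  - eapply dlim_eq.
    apply (dl_plus (fun t => fst (f t) * snd (g t)) (fun t => snd (f t) * fst (g t)));
    [apply (dl_mult (fun t => fst (f t)) (fun t => snd (g t))); eauto
    |apply (dl_mult (fun t => snd (f t)) (fun t => fst (g t))); eauto]. ring.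
Qed.

Lemma Cd_inv f x df : has_Cderiv f x df -> 0 < Cnorm (f x) ->
  has_Cderiv (fun t => Cinv (f t)) x (Copp (Cmul df (Cinv (Cmul (f x) (f x))))).
Proof.
  intros [A1 A2] Hn. pose proof (n2_pos _ Hn) as Hp.
  assert (Dn : derivable_pt_lim (fun t => fst (f t) ^ 2 + snd (f t) ^ 2) x
     (2 * fst (f x) * fst df + 2 * snd (f x) * snd df)).
  { apply (dl_plus (fun t => fst (f t) ^ 2) (fun t => snd (f t) ^ 2));
    apply (dl_pow2 (fun t => _ (f t))); auto. }
  assert (Hm: 0 < (fst (f x) * fst (f x) - snd (f x) * snd (f x)) ^ 2 +
                  (fst (f x) * snd (f x) + snd (f x) * fst (f x)) ^ 2).
  { replace ((fst (f x) * fst (f x) - snd (f x) * snd (f x)) ^ 2 +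
                  (fst (f x) * snd (f x) + snd (f x) * fst (f x)) ^ 2) with
      ((fst (f x) ^ 2 + snd (f x) ^ 2)^2) by ring. nra. }
  split; unfold Cinv, Copp, Cmul; cbv zeta; cbn [fst snd].
  - eapply dlim_eq.
    apply (dl_div (fun t => fst (f t)) (fun t => fst (f t) ^ 2 + snd (f t) ^ 2)); eauto; lra.
    field; lra.
  - eapply dlim_eq.
    apply (dl_div (fun t => - snd (f t)) (fun t => fst (f t) ^ 2 + snd (f t) ^ 2));
    [apply (dl_opp (fun t => snd (f t))); eauto | eauto | lra].
    field; lra.
Qed.

Definition Ccont (f : R -> Cx) x :=
  continuity_pt (fun t => fst (f t)) x /\ continuity_pt (fun t => snd (f t)) x.

Lemma Cd_cont f x d : has_Cderiv f x d -> Ccont f x.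
Proof.
  intros [A1 A2]; split; apply derivable_continuous_pt; eexists; eauto.
Qed.

Lemma cp_plus f g x : continuity_pt f x -> continuity_pt g x -> continuity_pt (fun t => f t + g t) x.
Proof. intros; apply (continuity_pt_plus f g); auto. Qed.
Lemma cp_minus f g x : continuity_pt f x -> continuity_pt g x -> continuity_pt (fun t => f t - g t) x.
Proof. intros; apply (continuity_pt_minus f g); auto. Qed.
Lemma cp_mult f g x : continuity_pt f x -> continuity_pt g x -> continuity_pt (fun t => f t * g t) x.
Proof. intros; apply (continuity_pt_mult f g); auto. Qed.
Lemma cp_opp f x : continuity_pt f x -> continuity_pt (fun t => - f t) x.
Proof. intros; apply (continuity_pt_opp f); auto. Qed.
Lemma cp_div f g x : continuity_pt f x -> continuity_pt g x -> g x <> 0 -> continuity_pt (fun t => f t / g t) x.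
Proof. intros; apply (continuity_pt_div f g); auto. Qed.
Lemma cp_const c x : continuity_pt (fun _ => c) x.
Proof. apply continuity_pt_const. intros a b; auto. Qed.

Lemma Cc_add f g x : Ccont f x -> Ccont g x -> Ccont (fun t => Cadd (f t) (g t)) x.
Proof. intros [] []; split; unfold Cadd; cbn [fst snd]; apply cp_plus; auto. Qed.
Lemma Cc_opp f x : Ccont f x -> Ccont (fun t => Copp (f t)) x.
Proof. intros []; split; unfold Copp; cbn [fst snd]; apply cp_opp; auto. Qed.
Lemma Cc_sub f g x : Ccont f x -> Ccont g x -> Ccont (fun t => Csub (f t) (g t)) x.
Proof. intros; unfold Csub; apply Cc_add; auto; apply Cc_opp; auto. Qed.
Lemma Cc_mul f g x : Ccont f x -> Ccont g x -> Ccont (fun t => Cmul (f t) (g t)) x.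
Proof. intros [] []; split; unfold Cmul; cbn [fst snd];
  first [apply cp_minus | apply cp_plus]; apply cp_mult; auto. Qed.
Lemma Cc_const c x : Ccont (fun _ => c) x.
Proof. split; apply cp_const. Qed.
Lemma Cc_inv f x : Ccont f x -> 0 < Cnorm (f x) -> Ccont (fun t => Cinv (f t)) x.
Proof.
  intros [A1 A2] Hn. pose proof (n2_pos _ Hn).
  assert (continuity_pt (fun t => fst (f t) ^ 2 + snd (f t) ^ 2) x).
  { apply cp_plus; simpl; repeat apply cp_mult; auto; apply cp_const. }
  split; unfold Cinv; cbv zeta; cbn [fst snd]; apply cp_div; auto; try lra.
  apply cp_opp; auto.
Qed.
Lemma Cc_div f g x : Ccont f x -> Ccont g x -> 0 < Cnorm (g x) -> Ccont (fun t => Cdiv (f t) (g t)) x.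
Proof. intros; unfold Cdiv; apply Cc_mul; auto; apply Cc_inv; auto. Qed.
Lemma Cc_norm f x : Ccont f x -> continuity_pt (fun t => Cnorm (f t)) x.
Proof.
  intros [A1 A2]. unfold Cnorm.
  apply (continuity_pt_comp (fun t => fst (f t) ^ 2 + snd (f t) ^ 2) sqrt).
  apply cp_plus; simpl; repeat apply cp_mult; auto; apply cp_const.
  apply continuity_pt_sqrt. nra.
Qed.

Lemma sqrt_eq a b : 0 <= b -> b * b = a -> sqrt a = b.
Proof. intros H E. rewrite <- E. apply sqrt_square. auto. Qed.

Lemma sqrt_1_t2 x y : x <> 0 -> sqrt (1 + (y / x)²) = Cnorm (x, y) / Rabs x.
Proof.
  intro Hx. pose proof (Cnorm_sq (x,y)). pose proof (Cnorm_ge0 (x,y)).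
  cbn [fst snd] in H. pose proof (Rabs_pos_lt x Hx).
  apply sqrt_eq. unfold Rdiv; apply Rmult_le_pos; [lra | left; apply Rinv_0_lt_compat; lra].
  unfold Rsqr. replace (Cnorm (x, y) / Rabs x * (Cnorm (x, y) / Rabs x)) with
   ((Cnorm (x,y) * Cnorm (x,y)) / (Rabs x * Rabs x)) by (field; lra).
  rewrite H. rewrite <- Rabs_mult, Rabs_pos_eq by nra. field. auto.
Qed.

Lemma polar z : 0 < Cnorm z ->
  Cnorm z * cos (Carg z) = fst z /\ Cnorm z * sin (Carg z) = snd z.
Proof.
  intro Hr. destruct z as [x y]. pose proof (Cnorm_sq (x,y)). cbn [fst snd] in *.
  set (r := Cnorm (x, y)) in *.
  unfold Carg; cbn [fst snd].
  destruct (Rlt_dec 0 x).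
  - rewrite cos_atan, sin_atan, sqrt_1_t2 by lra. fold r. rewrite Rabs_pos_eq by lra.
    split; field; lra.
  - destruct (Rlt_dec x 0).
    + assert (Ha : forall a, cos a = 1 / sqrt (1 + (y/x)²) -> sin a = y / x / sqrt (1 + (y/x)²) ->
         r * cos a = - x /\ r * sin a = - y).
      { intros a Hc Hs. rewrite Hc, Hs, sqrt_1_t2 by lra. fold r. rewrite Rabs_left by lra.
        split; field; lra. }
      specialize (Ha (atan (y/x)) (cos_atan _) (sin_atan _)).
      destruct (Rle_dec 0 y).
      * rewrite neg_cos, neg_sin. lra.
      * rewrite cos_minus, sin_minus, cos_PI, sin_PI. lra.
    + assert (x = 0) by lra. subst x.
      assert (Hry : r * r = y * y) by lra.
      destruct (Rlt_dec 0 y).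
      * rewrite cos_PI2, sin_PI2. assert (r = y) by nra. lra.
      * destruct (Rlt_dec y 0).
        -- rewrite cos_neg, sin_neg, cos_PI2, sin_PI2. assert (r = - y) by nra. lra.
        -- assert (y = 0) by lra. subst. nra.
Qed.

Definition Cgood (z : Cx) := 0 < Cnorm z + fst z.

Lemma good_pos z : Cgood z -> 0 < Cnorm z.
Proof. unfold Cgood; intro. pose proof (Cnorm_fst z). unfold Rabs in H0.
  destruct (Rcase_abs (fst z)); lra. Qed.

Lemma Carg_range z : Cgood z -> - PI < Carg z < PI.
Proof.
  intro G. pose proof (good_pos z G). destruct z as [x y]. unfold Cgood in G.
  pose proof (Cnorm_sq (x,y)). cbn [fst snd] in *. set (r := Cnorm (x,y)) in *.
  pose proof PI_RGT_0.
  unfold Carg; cbn [fst snd].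
  destruct (Rlt_dec 0 x).
  - pose proof (atan_bound (y/x)). lra.
  - destruct (Rlt_dec x 0).
    + pose proof (atan_bound (y/x)). destruct (Rle_dec 0 y).
      * destruct r1.
        -- assert (Hq : y / x < 0). { apply Rdiv_pos_neg; lra. }
           pose proof (atan_increasing _ _ Hq) as Hq'. rewrite atan_0 in Hq'. lra.
        -- subst y. exfalso. assert (r = - x) by nra. lra.
      * assert (Hq : 0 < y / x). { apply Rdiv_neg_neg; lra. }
        pose proof (atan_increasing _ _ Hq) as Hq'. rewrite atan_0 in Hq'. lra.
    + destruct (Rlt_dec 0 y). lra. destruct (Rlt_dec y 0); lra.
Qed.

Definition Csqs (z : Cx) := sqrt ((Cnorm z + fst z) / 2).
Definition Csq (z : Cx) : Cx := (Csqs z, snd z / (2 * Csqs z)).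

Lemma Csqs_pos z : Cgood z -> 0 < Csqs z.
Proof. intro G; unfold Csqs, Cgood in *. apply sqrt_lt_R0. lra. Qed.

Lemma Csqs_sq z : Cgood z -> Csqs z * Csqs z = (Cnorm z + fst z) / 2.
Proof. intro G; unfold Csqs, Cgood in *. apply sqrt_sqrt. lra. Qed.

Lemma Csq_sq z : Cgood z -> Cmul (Csq z) (Csq z) = z.
Proof.
  intro G. pose proof (Csqs_pos z G). pose proof (Csqs_sq z G). pose proof (Cnorm_sq z).
  unfold Cgood in G.
  unfold Csq, Cmul; apply Cx_eq; cbn [fst snd].
  - set (s := Csqs z) in *. set (r := Cnorm z) in *.
    replace (s * s - snd z / (2 * s) * (snd z / (2 * s))) with
       (s * s - snd z ^ 2 / (4 * (s * s))) by (field; lra).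
    rewrite H0. field_simplify; try lra. 
    replace (snd z ^ 2) with (r * r - fst z ^ 2) by lra.
    field; lra.
  - field; lra.
Qed.

Lemma Cnorm_Csq z : Cgood z -> Cnorm (Csq z) = sqrt (Cnorm z).
Proof.
  intro G. pose proof (Csqs_pos z G). pose proof (Csqs_sq z G). pose proof (Cnorm_sq z).
  pose proof (good_pos z G). unfold Cgood in G.
  symmetry. apply sqrt_eq. apply Cnorm_ge0.
  rewrite Cnorm_sq. unfold Csq; cbn [fst snd].
  set (s := Csqs z) in *. set (r := Cnorm z) in *.
  replace (s ^ 2 + (snd z / (2 * s)) ^ 2) with (s * s + snd z ^ 2 / (4 * (s * s))) by (field; lra).
  rewrite H0. replace (snd z ^ 2) with (r * r - fst z ^ 2) by lra. field; lra.
Qed.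

Lemma Cpow32_good z : Cgood z -> Cpow32 z = Cmul z (Csq z).
Proof.
  intro G. pose proof (good_pos z G) as Hr. pose proof (Carg_range z G) as Hth.
  pose proof (polar z Hr) as [Hc Hs]. pose proof (Csqs_pos z G) as Hs0.
  pose proof (Csqs_sq z G) as Hss.
  unfold Cpow32. destruct (Req_EM_T (Cnorm z) 0). lra.
  set (r := Cnorm z) in *. set (th := Carg z) in *. set (s := Csqs z) in *.
  set (ph := th / 2).
  assert (Eth : th = 2 * ph) by (unfold ph; field).
  assert (Hcp : 0 < cos ph) by (apply cos_gt_0; unfold ph; lra).
  assert (Hsr : 0 < sqrt r) by (apply sqrt_lt_R0; auto).
  assert (Hrr : sqrt r * sqrt r = r) by (apply sqrt_sqrt; lra).
  assert (E1 : sqrt r * cos ph = s).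
  { unfold s, Csqs. fold r. symmetry. apply sqrt_eq. nra.
    replace (sqrt r * cos ph * (sqrt r * cos ph)) with ((sqrt r * sqrt r) * (cos ph * cos ph)) by ring.
    rewrite Hrr.
    assert (cos th = 2 * cos ph * cos ph - 1) by (rewrite Eth; apply cos_2a_cos).
    replace (cos ph * cos ph) with ((cos th + 1) / 2) by lra. lra. }
  assert (E2 : sqrt r * sin ph = snd z / (2 * s)).
  { rewrite <- Hs, <- E1, Eth, sin_2a.
    replace (r * (2 * sin ph * cos ph)) with ((sqrt r * sqrt r) * (2 * sin ph * cos ph)) by (rewrite Hrr; ring).
    field. lra. }
  assert (Ep : Rpower r (3 / 2) = r * sqrt r).
  { replace (3/2) with (1 + / 2) by field. rewrite Rpower_plus, Rpower_1, Rpower_sqrt; auto. }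
  replace (3 / 2 * th) with (th + ph) by (unfold ph; field).
  rewrite Ep, cos_plus, sin_plus.
  unfold Cmul, Csq; apply Cx_eq; cbn [fst snd]; fold s.
  - rewrite <- E2, <- E1, <- Hc, <- Hs. ring.
  - rewrite <- E2, <- E1, <- Hc, <- Hs. ring.
Qed.

Lemma cont_pos_nbhd f x : continuity_pt f x -> 0 < f x ->
  exists d, 0 < d /\ forall t, Rabs (t - x) < d -> 0 < f t.
Proof.
  intros Hc Hp. destruct (Hc (f x / 2)) as [d [Hd H]]. lra.
  exists d; split; auto. intros t Ht.
  destruct (Req_dec t x). subst; auto.
  assert (Hdist := H t). simpl in Hdist. unfold R_dist, D_x, no_cond in Hdist.
  assert (Rabs (f t - f x) < f x / 2). apply Hdist. split; auto.
  unfold Rabs in H1; destruct (Rcase_abs (f t - f x)); lra.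
Qed.

Lemma Cd_good_nbhd q x dq : has_Cderiv q x dq -> Cgood (q x) ->
  exists d, 0 < d /\ forall t, x - d < t < x + d -> Cgood (q t).
Proof.
  intros Hd G. pose proof (Cd_cont _ _ _ Hd) as Hc.
  assert (continuity_pt (fun t => Cnorm (q t) + fst (q t)) x).
  { apply cp_plus. apply Cc_norm; auto. destruct Hc; auto. }
  destruct (cont_pos_nbhd _ _ H G) as [d [Hd0 Hd1]].
  exists d; split; auto. intros t Ht. apply Hd1. unfold Rabs; destruct (Rcase_abs (t - x)); lra.
Qed.

Lemma Cd_Csq_ex q x dq : has_Cderiv q x dq -> Cgood (q x) ->
  exists d, has_Cderiv (fun t => Csq (q t)) x d.
Proof.
  intros [A1 A2] G. pose proof (good_pos _ G) as Hr. pose proof (n2_pos _ Hr) as Hn.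
  pose proof (Csqs_pos _ G) as Hs. unfold Csqs, Cgood, Cnorm in *.
  assert (D1 : derivable_pt_lim (fun t => sqrt (fst (q t) ^ 2 + snd (q t) ^ 2)) x
     (((2 * fst (q x) * fst dq) + (2 * snd (q x) * snd dq)) / (2 * sqrt (fst (q x) ^ 2 + snd (q x) ^ 2)))).
  { apply (dl_sqrt (fun t => fst (q t) ^ 2 + snd (q t) ^ 2)); auto.
    apply (dl_plus (fun t => fst (q t) ^ 2) (fun t => snd (q t) ^ 2));
    apply (dl_pow2 (fun t => _ (q t))); auto. }
  assert (D2 : exists l, derivable_pt_lim
     (fun t => sqrt ((sqrt (fst (q t) ^ 2 + snd (q t) ^ 2) + fst (q t)) / 2)) x l).
  { eexists. apply (dl_sqrt (fun t => (sqrt (fst (q t) ^ 2 + snd (q t) ^ 2) + fst (q t)) / 2)).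
    2: lra.
    apply (dl_div (fun t => (sqrt (fst (q t) ^ 2 + snd (q t) ^ 2) + fst (q t))) (fun _ => 2)).
    apply (dl_plus (fun t => sqrt (fst (q t) ^ 2 + snd (q t) ^ 2)) (fun t => fst (q t))); eauto.
    apply dl_const. lra. }
  destruct D2 as [l2 D2].
  exists (l2, (snd dq * (2 * sqrt ((sqrt (fst (q x) ^ 2 + snd (q x) ^ 2) + fst (q x)) / 2))
             - (0 * sqrt ((sqrt (fst (q x) ^ 2 + snd (q x) ^ 2) + fst (q x)) / 2) + 2 * l2) * snd (q x))
            / ((2 * sqrt ((sqrt (fst (q x) ^ 2 + snd (q x) ^ 2) + fst (q x)) / 2)) *
               (2 * sqrt ((sqrt (fst (q x) ^ 2 + snd (q x) ^ 2) + fst (q x)) / 2)))).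
  split; unfold Csq, Csqs, Cnorm; cbn [fst snd]; auto.
  apply (dl_div (fun t => snd (q t)) (fun t => 2 * sqrt ((sqrt (fst (q t) ^ 2 + snd (q t) ^ 2) + fst (q t)) / 2))); auto.
  apply (dl_mult (fun _ => 2) (fun t => sqrt ((sqrt (fst (q t) ^ 2 + snd (q t) ^ 2) + fst (q t)) / 2))); auto.
  apply dl_const. lra.
Qed.

Lemma uniq_Cd f x d1 d2 : has_Cderiv f x d1 -> has_Cderiv f x d2 -> d1 = d2.
Proof.
  intros [A1 A2] [B1 B2]. apply Cx_eq; eapply uniqueness_limite; eauto.
Qed.

Lemma Cdiv_cancel w d : 0 < Cnorm w -> Cdiv (Cmul w d) w = d.
Proof.
  intro H. pose proof (n2_pos _ H). unfold Cdiv, Cmul, Cinv; apply Cx_eq; cbv zeta; cbn [fst snd];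
  field; lra.
Qed.

Lemma Cd_Csq q x dq : has_Cderiv q x dq -> Cgood (q x) ->
  has_Cderiv (fun t => Csq (q t)) x (Cdiv dq (Cmul (RtoC 2) (Csq (q x)))).
Proof.
  intros Hq G. destruct (Cd_Csq_ex q x dq Hq G) as [dF HF].
  destruct (Cd_good_nbhd q x dq Hq G) as [d [Hd0 Hd1]].
  pose proof (Cd_mul _ _ _ _ _ HF HF) as HFF.
  assert (HFF' : has_Cderiv q x (Cadd (Cmul dF (Csq (q x))) (Cmul (Csq (q x)) dF))).
  { eapply Cd_loc with (a := x - d) (b := x + d). lra. 2: exact HFF.
    intros t Ht. apply Csq_sq. apply Hd1. auto. }
  pose proof (uniq_Cd _ _ _ _ Hq HFF') as E. subst dq.
  assert (Hpos : 0 < Cnorm (Cmul (RtoC 2) (Csq (q x)))).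
  { rewrite Cnorm_mul, Cnorm_RtoC, Cnorm_Csq by auto. rewrite Rabs_pos_eq by lra.
    pose proof (sqrt_lt_R0 _ (good_pos _ G)). lra. }
  replace (Cadd (Cmul dF (Csq (q x))) (Cmul (Csq (q x)) dF)) with
     (Cmul (Cmul (RtoC 2) (Csq (q x))) dF).
  rewrite Cdiv_cancel; auto.
  unfold Cadd, Cmul, RtoC; apply Cx_eq; cbn [fst snd]; ring.
Qed.

Definition fsum (l : list nat) (A : nat -> Cx) (T : nat -> R -> R) (x : R) : Cx :=
  fold_right (fun i acc => Cadd (Cmul (A i) (RtoC (T i x))) acc) (0, 0) l.

Lemma fsum_deriv l A T T' x : (forall i, derivable_pt_lim (T i) x (T' i x)) ->
  has_Cderiv (fun t => fsum l A T t) x (fsum l A T' x).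
Proof.
  intro HT. induction l as [|i l IH]; simpl.
  - apply Cd_const.
  - eapply Cd_eq. apply Cd_add; [|exact IH].
    apply Cd_mul. apply Cd_const. apply (Cd_RtoC (T i)). apply HT.
    unfold Cadd, Cmul, RtoC; apply Cx_eq; cbn [fst snd]; ring.
Qed.

Lemma fsum_cont l A T x : (forall i, continuity_pt (T i) x) ->
  Ccont (fun t => fsum l A T t) x.
Proof.
  intro HT. induction l as [|i l IH]; simpl.
  - apply Cc_const.
  - apply Cc_add; auto. apply Cc_mul. apply Cc_const.
    split; unfold RtoC; cbn [fst snd]. apply HT. apply cp_const.
Qed.

Lemma fsum_bound l A T x B : (forall i, In i l -> Cnorm (A i) * Rabs (T i x) <= B) ->
  Cnorm (fsum l A T x) <= INR (length l) * B.
Proof.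
  intro HB. induction l as [|i l IH]; unfold fsum; cbn [fold_right length].
  - change (INR 0) with 0. replace (Cnorm (0,0)) with 0. lra. symmetry; apply Cnorm_unique; simpl; lra.
  - eapply Rle_trans. apply Cnorm_add. rewrite Cnorm_mul, Cnorm_RtoC.
    rewrite S_INR. assert (Cnorm (A i) * Rabs (T i x) <= B) by (apply HB; left; auto).
    assert (Cnorm (fsum l A T x) <= INR (length l) * B). apply IH. intros; apply HB; right; auto.
    unfold fsum in H0. lra.
Qed.

Lemma fsum_bound_seq m A T x B : (forall i, In i (seq 0 m) -> Cnorm (A i) * Rabs (T i x) <= B) ->
  Cnorm (fsum (seq 0 m) A T x) <= INR m * B.
Proof. intro H. rewrite <- (length_seq m 0) at 2. apply fsum_bound; auto. Qed.

Lemma pow_le_1px x k n : 0 <= x -> (k <= n)%nat -> x ^ k <= (1 + x) ^ n.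
Proof.
  intros Hx Hk. apply Rle_trans with ((1+x)^k).
  apply pow_incr; lra. apply Rle_pow; auto; lra.
Qed.

Lemma INR_sub_le m k : INR (m - k) <= INR m.
Proof. apply le_INR; lia. Qed.

Definition d2Q (m : nat) (a : nat -> Cx) (x : R) : Cx :=
  Cadd (RtoC (INR m * (INR (m - 1) * x ^ (m - 1 - 1))))
       (fsum (seq 0 m) (fun i => a (S i))
          (fun i x => INR (m - S i) * (INR (m - S i - 1) * x ^ (m - S i - 1 - 1))) x).

Lemma dl_pow_sub n x : derivable_pt_lim (fun y => y ^ n) x (INR n * x ^ (n - 1)).
Proof. replace (n - 1)%nat with (Nat.pred n) by lia. apply derivable_pt_lim_pow. Qed.

Lemma dl_cpow c n x : derivable_pt_lim (fun y => c * y ^ n) x (c * (INR n * x ^ (n - 1))).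
Proof.
  eapply dlim_eq. apply (dl_mult (fun _ => c) (fun y => y ^ n)). apply dl_const. apply dl_pow_sub.
  ring.
Qed.

Lemma Cadd_0_r z : Cadd z (0,0) = z.
Proof. apply Cx_eq; unfold Cadd; cbn [fst snd]; ring. Qed.

Lemma Qfun_deriv m a lam x : has_Cderiv (Qfun m a lam) x (dQfun m a x).
Proof.
  unfold Qfun, dQfun. eapply Cd_eq.
  apply Cd_add. apply (Cd_RtoC (fun t => t ^ m)). apply dl_pow_sub.
  apply Cd_add. apply (fsum_deriv (seq 0 m) (fun i => a (S i)) (fun i t => t ^ (m - S i))
     (fun i t => INR (m - S i) * t ^ (m - S i - 1))).
  intro i. apply dl_pow_sub. apply Cd_const.
  rewrite Cadd_0_r. reflexivity.
Qed.

Lemma dQfun_deriv m a x : has_Cderiv (dQfun m a) x (d2Q m a x).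
Proof.
  unfold dQfun, d2Q. apply Cd_add. apply (Cd_RtoC (fun t => INR m * t ^ (m - 1))). apply dl_cpow.
  apply (fsum_deriv (seq 0 m) (fun i => a (S i)) (fun i t => INR (m - S i) * t ^ (m - S i - 1))
     (fun i t => INR (m - S i) * (INR (m - S i - 1) * t ^ (m - S i - 1 - 1)))).
  intro i. apply dl_cpow.
Qed.

Lemma cp_cpow c n x : continuity_pt (fun t => c * t ^ n) x.
Proof. apply derivable_continuous_pt. eexists. apply dl_cpow. Qed.

Lemma d2Q_cont m a x : Ccont (d2Q m a) x.
Proof.
  unfold d2Q. apply Cc_add.
  - split; unfold RtoC; cbn [fst snd]. 2: apply cp_const.
    apply cp_mult. apply cp_const. apply cp_cpow.
  - apply fsum_cont. intro i. apply cp_mult. apply cp_const. apply cp_cpow.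
Qed.

Section Bounds.
Variables (m : nat) (a : nat -> Cx) (Mp : R).
Hypothesis Ha : forall i, (1 <= i <= m)%nat -> Cnorm (a i) <= Mp.
Hypothesis Hm : (1 <= m)%nat.

Lemma Ha' i : In i (seq 0 m) -> Cnorm (a (S i)) <= Mp.
Proof. intro H. apply in_seq in H. apply Ha. lia. Qed.

Lemma Mp_nonneg : 0 <= Mp.
Proof. pose proof (Ha 1%nat ltac:(lia)). pose proof (Cnorm_ge0 (a 1%nat)). lra. Qed.

Lemma polyP_bound x : 0 <= x -> Cnorm (polyP m a x) <= INR m * Mp * (1 + x) ^ (m - 1).
Proof.
  intro Hx. change (polyP m a x) with (fsum (seq 0 m) (fun i => a (S i)) (fun i t => t ^ (m - S i)) x).
  rewrite Rmult_assoc. apply fsum_bound_seq.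
  intros i Hi. apply Rmult_le_compat. apply Cnorm_ge0. apply Rabs_pos. apply Ha'; auto.
  rewrite Rabs_pos_eq by (apply pow_le; auto). apply pow_le_1px; auto. lia.
Qed.

Lemma dQ_bound x : 0 <= x -> Cnorm (dQfun m a x) <= INR m * (1 + Mp * INR m) * (1 + x) ^ (m - 1).
Proof.
  intro Hx. pose proof Mp_nonneg. pose proof (pos_INR m). unfold dQfun.
  eapply Rle_trans. apply Cnorm_add. rewrite Cnorm_RtoC.
  change (fold_right _ _ _) with (fsum (seq 0 m) (fun i => a (S i)) (fun i t => INR (m - S i) * t ^ (m - S i - 1)) x).
  assert (H1 : Cnorm (fsum (seq 0 m) (fun i => a (S i)) (fun i t => INR (m - S i) * t ^ (m - S i - 1)) x)
     <= INR m * (Mp * (INR m * (1 + x) ^ (m - 1)))).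
  { apply fsum_bound_seq.
    intros i Hi. apply Rmult_le_compat. apply Cnorm_ge0. apply Rabs_pos. apply Ha'; auto.
    rewrite Rabs_pos_eq by (apply Rmult_le_pos; [apply pos_INR | apply pow_le; auto]).
    apply Rmult_le_compat. apply pos_INR. apply pow_le; auto. apply le_INR; lia.
    apply pow_le_1px; auto. lia. }
  assert (H2 : Rabs (INR m * x ^ (m - 1)) <= INR m * (1 + x) ^ (m - 1)).
  { rewrite Rabs_pos_eq by (apply Rmult_le_pos; [apply pos_INR | apply pow_le; auto]).
    apply Rmult_le_compat_l. auto. apply pow_le_1px; auto. }
  nra.
Qed.

Lemma d2Q_bound x : 0 <= x -> Cnorm (d2Q m a x) <= INR m * INR m * (1 + Mp * INR m) * (1 + x) ^ (m - 2).
Proof.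
  intro Hx. pose proof Mp_nonneg. pose proof (pos_INR m). unfold d2Q.
  eapply Rle_trans. apply Cnorm_add. rewrite Cnorm_RtoC.
  assert (H1 : Cnorm (fsum (seq 0 m) (fun i => a (S i))
          (fun i x => INR (m - S i) * (INR (m - S i - 1) * x ^ (m - S i - 1 - 1))) x)
     <= INR m * (Mp * (INR m * (INR m * (1 + x) ^ (m - 2))))).
  { apply fsum_bound_seq.
    intros i Hi. apply Rmult_le_compat. apply Cnorm_ge0. apply Rabs_pos. apply Ha'; auto.
    rewrite Rabs_pos_eq by (repeat apply Rmult_le_pos; try apply pos_INR; apply pow_le; auto).
    apply Rmult_le_compat. apply pos_INR. apply Rmult_le_pos. apply pos_INR. apply pow_le; auto.
    apply le_INR; lia.
    apply Rmult_le_compat. apply pos_INR. apply pow_le; auto. apply le_INR; lia.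
    apply pow_le_1px; auto. lia. }
  assert (H2 : Rabs (INR m * (INR (m - 1) * x ^ (m - 1 - 1))) <= INR m * (INR m * (1 + x) ^ (m - 2))).
  { rewrite Rabs_pos_eq by (repeat apply Rmult_le_pos; try apply pos_INR; apply pow_le; auto).
    apply Rmult_le_compat_l. auto. apply Rmult_le_compat. apply pos_INR. apply pow_le; auto.
    apply le_INR; lia. apply pow_le_1px; auto. lia. }
  nra.
Qed.
End Bounds.

Lemma sector lam delta : 0 < Cnorm lam -> 0 < delta <= PI / 2 ->
  Rabs (Carg lam) <= PI - delta -> - (Cnorm lam * cos delta) <= fst lam.
Proof.
  intros HL Hd Ha. destruct (polar lam HL) as [Hc _]. rewrite <- Hc.
  assert (cos (Carg lam) = cos (Rabs (Carg lam))).
  { unfold Rabs; destruct (Rcase_abs (Carg lam)); auto. rewrite cos_neg; auto. }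
  assert (- cos delta <= cos (Carg lam)).
  { rewrite H, <- cos_pi_minus. apply cos_decr_1; try lra. apply Rabs_pos.
    }
  nra.
Qed.

Section W.
Variables (X0 u v L c : R).
Hypotheses (HX0 : 0 <= X0) (HL : 0 < L) (HL2 : L * L = u * u + v * v)
  (Hc0 : 0 < c) (Hc1 : c < 1) (Hu : - (L * c) <= u).

Lemma w_lower : (1 - c) / 2 * (X0 + L) * (X0 + L) <= (X0 + u) * (X0 + u) + v * v.
Proof.
  assert (E : (X0 + u) * (X0 + u) + v * v = X0 * X0 + 2 * X0 * u + L * L) by nra.
  rewrite E.
  assert (0 <= X0 * (u + L * c)) by (apply Rmult_le_pos; lra).
  assert (0 <= (1 + c) * ((X0 - L) * (X0 - L))).
  { apply Rmult_le_pos. lra. pose proof (Rle_0_sqr (X0 - L)). unfold Rsqr in *. lra. }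
  lra.
Qed.

Lemma w_re : - (X0 + u) <= c * sqrt ((X0 + u) * (X0 + u) + v * v).
Proof.
  destruct (Rle_lt_dec 0 (X0 + u)).
  - pose proof (sqrt_pos ((X0 + u) * (X0 + u) + v * v)). nra.
  - assert (u < 0) by lra.
    assert (Hu2 : u * u <= L * L * (c * c)) by nra.
    assert (Hw : (X0 + u) * (X0 + u) <= u * u) by nra.
    assert (Hc2 : 0 <= 1 - c * c) by nra.
    assert (Hk1 : (1 - c * c) * ((X0 + u) * (X0 + u)) <= (1 - c * c) * (u * u))
      by (apply Rmult_le_compat_l; auto).
    assert (Hk2 : c * c * (v * v) = c * c * (L * L) - c * c * (u * u)) by (rewrite HL2; ring).
    assert (Hk : (1 - c * c) * ((X0 + u) * (X0 + u)) <= c * c * (v * v)) by lra.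
    apply Rsqr_incr_0_var. 2: { pose proof (sqrt_pos ((X0 + u) * (X0 + u) + v * v)). nra. }
    unfold Rsqr. replace (c * sqrt ((X0 + u) * (X0 + u) + v * v) * (c * sqrt ((X0 + u) * (X0 + u) + v * v)))
      with (c * c * (sqrt ((X0 + u) * (X0 + u) + v * v) * sqrt ((X0 + u) * (X0 + u) + v * v))) by ring.
    rewrite sqrt_sqrt by nra. nra.
Qed.
End W.

Lemma poly_absorb (n : nat) (A eta : R) : 0 <= A -> 0 < eta ->
  exists C0, 0 <= C0 /\ forall x, 0 <= x -> A * (1 + x) ^ n <= eta * x ^ (S n) + C0.
Proof.
  intros HA He. set (K := 1 + A * 2 ^ n / eta).
  assert (HK : 1 <= K). { unfold K. assert (0 <= A * 2 ^ n / eta).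
    { unfold Rdiv; apply Rmult_le_pos. apply Rmult_le_pos; auto. apply pow_le; lra.
      left; apply Rinv_0_lt_compat; auto. } lra. }
  exists (A * (1 + K) ^ n). split. apply Rmult_le_pos; auto. apply pow_le; lra.
  intros x Hx. destruct (Rle_lt_dec x K).
  - assert ((1 + x) ^ n <= (1 + K) ^ n) by (apply pow_incr; lra).
    assert (0 <= eta * x ^ S n) by (apply Rmult_le_pos; [lra|apply pow_le; auto]). nra.
  - assert (H1 : (1 + x) ^ n <= 2 ^ n * x ^ n).
    { rewrite <- Rpow_mult_distr. apply pow_incr; lra. }
    assert (H2 : A * 2 ^ n <= eta * x).
    { assert (A * 2 ^ n / eta <= x) by (unfold K in *; lra).
      apply Rmult_le_reg_r with (/ eta). apply Rinv_0_lt_compat; auto.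
      replace (eta * x * / eta) with x by (field; lra). auto. }
    assert (0 <= x ^ n) by (apply pow_le; auto).
    assert (0 <= A * (1 + K) ^ n) by (apply Rmult_le_pos; auto; apply pow_le; lra).
    simpl. nra.
Qed.

Section Nu.
Variables (x X : R) (m : nat).
Hypotheses (Hx : 0 <= x) (HX : 1 <= X).
Definition nu := Rmax x X.
Lemma nu_ge1 : 1 <= nu. Proof. unfold nu. pose proof (Rmax_r x X). lra. Qed.
Lemma nu_x : x <= nu. Proof. apply Rmax_l. Qed.
Lemma nu_X : X <= nu. Proof. apply Rmax_r. Qed.
Lemma nu_1px : 1 + x <= 2 * nu. Proof. pose proof nu_ge1; pose proof nu_x. lra. Qed.
Lemma nu_pow : nu ^ m <= x ^ m + X ^ m.
Proof.
  unfold nu, Rmax. destruct (Rle_dec x X).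
  - assert (0 <= x ^ m) by (apply pow_le; auto). lra.
  - assert (0 <= X ^ m) by (apply pow_le; lra). lra.
Qed.
Lemma pow_1px_nu j : (1 + x) ^ j <= 2 ^ j * nu ^ j.
Proof. rewrite <- Rpow_mult_distr. apply pow_incr. pose proof nu_1px. lra. Qed.
Lemma nu_pow_le j k : (j <= k)%nat -> nu ^ j <= nu ^ k.
Proof. intro. apply Rle_pow; auto. apply nu_ge1. Qed.
End Nu.

Lemma final_ineq (m : nat) (x X L q sg n1 n2 kk B1 B2 : R) :
  (2 <= m)%nat -> 0 <= x -> 1 <= X -> L = X ^ m -> 0 < kk -> 0 < sg -> sg * sg = q ->
  kk * (x ^ m + L) <= q -> 0 <= n1 -> n1 <= B1 * (1 + x) ^ (m - 1) ->
  0 <= n2 -> n2 <= B2 * (1 + x) ^ (m - 2) ->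
  (n2 / (q * sg) + n1 * n1 / (q * q * sg)) * (sqrt L * (X * X + x * x)) <=
  B2 * 2 ^ (m - 1) / (kk * sqrt kk) + B1 * B1 * (2 ^ (m - 1) * 2 ^ (m - 1) * 2) / (kk * kk * sqrt kk).
Proof.
  intros Hm Hx HX HL Hkk Hsg Hq HD Hn1 Hn1' Hn2 Hn2'.
  set (W := X * X + x * x). set (z := sqrt kk). set (sL := sqrt L).
  set (nu0 := nu x X).
  assert (Hz : 0 < z) by (apply sqrt_lt_R0; auto).
  assert (Hzz : z * z = kk) by (apply sqrt_sqrt; lra).
  assert (HqP : 0 < q) by nra.
  assert (HLp : 0 < L) by (rewrite HL; apply pow_lt; lra).
  assert (HxL : 0 <= x ^ m) by (apply pow_le; auto).
  assert (HsL : sL * z <= sg).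
  { unfold sL, z. rewrite <- sqrt_mult by lra. rewrite <- (sqrt_square sg) by lra.
    apply sqrt_le_1_alt. nra. }
  assert (HsL0 : 0 <= sL) by apply sqrt_pos.
  assert (HW0 : 0 <= W) by (unfold W; nra).
  pose proof (nu_ge1 x X HX) as Hnu1. fold nu0 in Hnu1.
  pose proof (nu_x x X) as Hnux. fold nu0 in Hnux.
  pose proof (nu_X x X) as HnuX. fold nu0 in HnuX.
  pose proof (nu_pow x X m Hx HX) as Hnum. fold nu0 in Hnum.
  assert (HW : W <= 2 * nu0 ^ 2) by (unfold W; simpl; nra).
  assert (Hnu_q : nu0 ^ m <= q / kk).
  { apply Rmult_le_reg_l with kk; auto. replace (kk * (q / kk)) with q by (field; lra).
    rewrite <- HL in Hnum. nra. }
  assert (Hnum0 : 0 <= nu0 ^ m) by (apply pow_le; lra).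
  assert (Hp1 : forall j, (1 + x) ^ j <= 2 ^ j * nu0 ^ j) by (intro; apply pow_1px_nu; auto).
  assert (Hsplit1 : nu0 ^ m = nu0 ^ (m - 2) * nu0 ^ 2).
  { rewrite <- pow_add. f_equal. lia. }
  assert (Hsplit2 : nu0 ^ m * nu0 ^ m = nu0 ^ (m - 1) * nu0 ^ (m - 1) * nu0 ^ 2).
  { rewrite <- !pow_add. f_equal. lia. }
  assert (H2m : 2 ^ (m - 1) = 2 ^ (m - 2) * 2).
  { replace (m - 1)%nat with (S (m - 2)) by lia. simpl. ring. }
  assert (Hpos2 : forall j, 0 < 2 ^ j) by (intro; apply pow_lt; lra).
  assert (Hposn : forall j, 0 <= nu0 ^ j) by (intro; apply pow_le; lra).
  assert (Hposx : forall j, 0 <= (1 + x) ^ j) by (intro; apply pow_le; lra).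
  assert (HA1 : n2 * W <= B2 * 2 ^ (m - 1) * (q / kk)).
  { assert (B2 >= 0). { assert (0 < (1 + x) ^ (m - 2)) by (apply pow_lt; lra).
      destruct (Rlt_le_dec B2 0); [|lra].
      assert (0 < (- B2) * (1 + x) ^ (m - 2)) by (apply Rmult_lt_0_compat; lra). lra. }
    apply Rle_trans with (B2 * ((1 + x) ^ (m - 2) * W)).
    { rewrite <- Rmult_assoc. apply Rmult_le_compat_r; auto. }
    rewrite Rmult_assoc. apply Rmult_le_compat_l. lra.
    apply Rle_trans with (2 ^ (m - 2) * nu0 ^ (m - 2) * (2 * nu0 ^ 2)).
    apply Rmult_le_compat; auto. rewrite H2m.
    apply Rle_trans with (2 ^ (m - 2) * 2 * nu0 ^ m). rewrite Hsplit1. right; ring.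
    apply Rmult_le_compat_l; auto. pose proof (Hpos2 (m-2)%nat). lra. }
  assert (HA2 : n1 * n1 * W <= B1 * B1 * (2 ^ (m - 1) * 2 ^ (m - 1) * 2) * (q / kk * (q / kk))).
  { assert (HB1 : B1 >= 0). { assert (0 < (1 + x) ^ (m - 1)) by (apply pow_lt; lra).
      destruct (Rlt_le_dec B1 0); [|lra].
      assert (0 < (- B1) * (1 + x) ^ (m - 1)) by (apply Rmult_lt_0_compat; lra). lra. }
    assert (Hb : n1 * n1 <= B1 * B1 * ((1 + x) ^ (m - 1) * (1 + x) ^ (m - 1))).
    { replace (B1 * B1 * ((1 + x) ^ (m - 1) * (1 + x) ^ (m - 1))) with
        ((B1 * (1 + x) ^ (m - 1)) * (B1 * (1 + x) ^ (m - 1))) by ring.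
      apply Rmult_le_compat; auto. }
    assert (Hcore : (1 + x) ^ (m - 1) * (1 + x) ^ (m - 1) * W <=
                    2 ^ (m - 1) * 2 ^ (m - 1) * 2 * (q / kk * (q / kk))).
    { apply Rle_trans with ((2 ^ (m - 1) * nu0 ^ (m - 1)) * (2 ^ (m - 1) * nu0 ^ (m - 1)) * (2 * nu0 ^ 2)).
      apply Rmult_le_compat; auto. apply Rmult_le_pos; auto.
      apply Rmult_le_compat; auto.
      apply Rle_trans with (2 ^ (m - 1) * 2 ^ (m - 1) * 2 * (nu0 ^ m * nu0 ^ m)).
      rewrite Hsplit2. right; ring.
      apply Rmult_le_compat_l. pose proof (Hpos2 (m-1)%nat). nra.
      apply Rmult_le_compat; auto. }
    apply Rle_trans with (B1 * B1 * ((1 + x) ^ (m - 1) * (1 + x) ^ (m - 1)) * W).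
    apply Rmult_le_compat_r; auto.
    replace (B1 * B1 * ((1 + x) ^ (m - 1) * (1 + x) ^ (m - 1)) * W) with
      (B1 * B1 * ((1 + x) ^ (m - 1) * (1 + x) ^ (m - 1) * W)) by ring.
    rewrite (Rmult_assoc (B1 * B1)). apply Rmult_le_compat_l. nra. auto. }
  assert (E : (n2 / (q * sg) + n1 * n1 / (q * q * sg)) * (sL * W) =
     (n2 * W) * sL / (q * sg) + (n1 * n1 * W) * sL / (q * q * sg)) by (field; lra).
  rewrite E.
  assert (T1 : (n2 * W) * sL / (q * sg) <= B2 * 2 ^ (m - 1) / (kk * z)).
  { apply Rle_trans with ((B2 * 2 ^ (m - 1) * (q / kk)) * (sg / z) / (q * sg)).
    unfold Rdiv at 1 3. apply Rmult_le_compat_r. left; apply Rinv_0_lt_compat; nra.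
    apply Rmult_le_compat; auto. nra.
    apply Rmult_le_reg_r with z; auto. replace (sg / z * z) with sg by (field; lra). lra.
    right. field. repeat split; lra. }
  assert (T2 : (n1 * n1 * W) * sL / (q * q * sg) <=
     B1 * B1 * (2 ^ (m - 1) * 2 ^ (m - 1) * 2) / (kk * kk * z)).
  { apply Rle_trans with ((B1 * B1 * (2 ^ (m - 1) * 2 ^ (m - 1) * 2) * (q / kk * (q / kk))) * (sg / z) / (q * q * sg)).
    unfold Rdiv at 1 3. apply Rmult_le_compat_r. left; apply Rinv_0_lt_compat.
    apply Rmult_lt_0_compat; nra.
    apply Rmult_le_compat; auto. nra.
    apply Rmult_le_reg_r with z; auto. replace (sg / z * z) with sg by (field; lra). lra.
    right. field. repeat split; lra. }
  lra.
Qed.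

Section QL.
Variables (m : nat) (a : nat -> Cx) (lam : Cx) (Mp c C0 : R).
Hypotheses (Hm : (1 <= m)%nat) (Ha : forall i, (1 <= i <= m)%nat -> Cnorm (a i) <= Mp)
  (Hc0 : 0 < c) (Hc1 : c < 1) (HL : 0 < Cnorm lam) (Hu : - (Cnorm lam * c) <= fst lam).
Let L := Cnorm lam.
Let k := sqrt ((1 - c) / 2).
Let eta := (1 - c) * k / 4.
Hypotheses (HC0 : forall x, 0 <= x -> INR m * Mp * (1 + x) ^ (m - 1) <= eta * x ^ m + C0)
  (HC0L : C0 <= eta * L).

Lemma Q_lower x : 0 <= x -> Cgood (Qfun m a lam x) /\ k / 2 * (x ^ m + L) <= Cnorm (Qfun m a lam x).
Proof.
  intro Hx. set (w := (x ^ m + fst lam, snd lam) : Cx). set (p := polyP m a x).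
  assert (EQ : Qfun m a lam x = Cadd w p).
  { unfold Qfun, w, p, Cadd, RtoC; apply Cx_eq; cbn [fst snd]; ring. }
  set (D := x ^ m + L).
  assert (HX0 : 0 <= x ^ m) by (apply pow_le; auto).
  assert (Hk : 0 < k) by (unfold k; apply sqrt_lt_R0; lra).
  assert (Hkk : k * k = (1 - c) / 2) by (unfold k; apply sqrt_sqrt; lra).
  assert (HL2 : L * L = fst lam * fst lam + snd lam * snd lam).
  { unfold L. rewrite Cnorm_sq. ring. }
  assert (Hw2 : Cnorm w * Cnorm w = (x ^ m + fst lam) * (x ^ m + fst lam) + snd lam * snd lam).
  { rewrite Cnorm_sq. unfold w; cbn [fst snd]. ring. }
  assert (Hwl : k * D <= Cnorm w).
  { apply Rsqr_incr_0_var. 2: apply Cnorm_ge0. unfold Rsqr. rewrite Hw2.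
    replace (k * D * (k * D)) with ((k * k) * D * D) by ring. rewrite Hkk. unfold D.
    apply (w_lower (x ^ m) (fst lam) (snd lam) L c); auto. }
  assert (Hwr : - fst w <= c * Cnorm w).
  { unfold Cnorm at 1. unfold w; cbn [fst snd].
    replace ((x ^ m + fst lam) ^ 2 + snd lam ^ 2) with
      ((x ^ m + fst lam) * (x ^ m + fst lam) + snd lam * snd lam) by ring.
    apply (w_re (x ^ m) (fst lam) (snd lam) L c); auto. }
  assert (Hp : Cnorm p <= eta * D).
  { eapply Rle_trans. apply (polyP_bound m a Mp Ha Hm x Hx). pose proof (HC0 x Hx). unfold D. lra. }
  assert (Heta : eta <= k / 4). { unfold eta. assert (0 <= c * k) by (apply Rmult_le_pos; lra). lra. }
  assert (HD : L <= D) by (unfold D; lra).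
  assert (Heta0 : 0 < eta) by (unfold eta; apply Rmult_lt_0_compat; [nra|lra]).
  pose proof (Cnorm_add_ge w p). pose proof (Cnorm_fst p).
  rewrite EQ. split.
  - unfold Cgood. replace (fst (Cadd w p)) with (fst w + fst p) by (unfold Cadd; reflexivity).
    assert (- Cnorm p <= fst p) by (unfold Rabs in *; destruct (Rcase_abs (fst p)); lra).
    assert (HD0 : 0 < D) by (unfold L in HD; lra).
    assert (0 < (1 - c) * k * D / 2).
    { assert (0 < (1 - c) * k) by (apply Rmult_lt_0_compat; lra).
      assert (0 < (1 - c) * k * D) by (apply Rmult_lt_0_compat; lra). lra. }
    assert ((1 - c) * (k * D) <= (1 - c) * Cnorm w) by (apply Rmult_le_compat_l; lra).
    unfold eta in Hp. lra.
  - assert (eta * D <= k / 4 * D) by (apply Rmult_le_compat_r; unfold L in HD; lra). assert (0 <= k * D) by (apply Rmult_le_pos; unfold L in HD; lra). lra.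
Qed.
End QL.

Section Gen.
Variables (Qf dQf d2Qf : R -> Cx).
Hypotheses (HQ : forall t, has_Cderiv Qf t (dQf t)) (HdQ : forall t, has_Cderiv dQf t (d2Qf t))
  (Hd2 : forall t, Ccont d2Qf t).

Definition gg x := Cdiv (dQf x) (Cmul (RtoC 8) (Cpow32 (Qf x))).
Definition hh x := Cdiv (dQf x) (Cmul (RtoC 4) (Qf x)).
Definition P32d x := Cadd (Cmul (dQf x) (Csq (Qf x)))
   (Cmul (Qf x) (Cdiv (dQf x) (Cmul (RtoC 2) (Csq (Qf x))))).
Definition Wf x := Cmul (RtoC 8) (Cpow32 (Qf x)).
Definition dWf x := Cadd (Cmul (0,0) (Cpow32 (Qf x))) (Cmul (RtoC 8) (P32d x)).
Definition Gd x := Cadd (Cmul (d2Qf x) (Cinv (Wf x)))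
   (Cmul (dQf x) (Copp (Cmul (dWf x) (Cinv (Cmul (Wf x) (Wf x)))))).

Lemma Cd_pow32 x : Cgood (Qf x) -> has_Cderiv (fun t => Cpow32 (Qf t)) x (P32d x).
Proof.
  intro G. destruct (Cd_good_nbhd Qf x (dQf x) (HQ x) G) as [d [Hd0 Hd1]].
  eapply Cd_loc with (a := x - d) (b := x + d). lra.
  2: { unfold P32d. exact (Cd_mul _ _ _ _ _ (HQ x) (Cd_Csq Qf x _ (HQ x) G)). }
  intros t Ht. symmetry. apply Cpow32_good. apply Hd1; auto.
Qed.

Lemma norm_pow32 z : Cgood z -> Cnorm (Cpow32 z) = Cnorm z * sqrt (Cnorm z).
Proof. intro G. rewrite Cpow32_good, Cnorm_mul, Cnorm_Csq; auto. Qed.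

Lemma Wf_pos x : Cgood (Qf x) -> 0 < Cnorm (Wf x).
Proof.
  intro G. unfold Wf. rewrite Cnorm_mul, Cnorm_RtoC, norm_pow32 by auto.
  pose proof (good_pos _ G). pose proof (sqrt_lt_R0 _ H). rewrite Rabs_pos_eq by lra.
  apply Rmult_lt_0_compat. lra. apply Rmult_lt_0_compat; auto.
Qed.

Lemma twoS_pos z : Cgood z -> 0 < Cnorm (Cmul (RtoC 2) (Csq z)).
Proof.
  intro G. rewrite Cnorm_mul, Cnorm_RtoC, Cnorm_Csq by auto. rewrite Rabs_pos_eq by lra.
  pose proof (sqrt_lt_R0 _ (good_pos _ G)). lra.
Qed.

Lemma Gd_deriv x : Cgood (Qf x) -> has_Cderiv gg x (Gd x).
Proof.
  intro G.
  pose proof (Cd_mul _ _ _ _ _ (Cd_const (RtoC 8) x) (Cd_pow32 x G)) as H1.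
  pose proof (Cd_inv _ _ _ H1 (Wf_pos x G)) as H2.
  pose proof (Cd_mul _ _ _ _ _ (HdQ x) H2) as H3.
  exact H3.
Qed.

Lemma gg_cont x : Cgood (Qf x) -> Ccont gg x.
Proof. intro G. eapply Cd_cont. apply Gd_deriv; auto. Qed.

Lemma hh_cont x : 0 < Cnorm (Qf x) -> Ccont hh x.
Proof.
  intro H. unfold hh. apply Cc_div. eapply Cd_cont; apply HdQ.
  apply Cc_mul. apply Cc_const. eapply Cd_cont; apply HQ.
  rewrite Cnorm_mul, Cnorm_RtoC, Rabs_pos_eq by lra. lra.
Qed.

Lemma Gd_cont x : Cgood (Qf x) -> Ccont Gd x.
Proof.
  intro G. pose proof (Wf_pos x G) as HW.
  assert (CQ : Ccont Qf x) by (eapply Cd_cont; apply HQ).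
  assert (CdQ : Ccont dQf x) by (eapply Cd_cont; apply HdQ).
  assert (CS : Ccont (fun t => Csq (Qf t)) x) by (eapply Cd_cont; apply Cd_Csq; auto).
  assert (CP : Ccont (fun t => Cpow32 (Qf t)) x) by (eapply Cd_cont; apply Cd_pow32; auto).
  assert (CW : Ccont Wf x) by (unfold Wf; apply Cc_mul; auto; apply Cc_const).
  assert (CP32 : Ccont P32d x).
  { unfold P32d. apply Cc_add; apply Cc_mul; auto. apply Cc_div; auto.
    apply Cc_mul; auto. apply Cc_const. apply twoS_pos; auto. }
  assert (CdW : Ccont dWf x).
  { unfold dWf. apply Cc_add; apply Cc_mul; auto; apply Cc_const. }
  unfold Gd. apply Cc_add; apply Cc_mul; auto.
  apply Cc_inv; auto.
  apply Cc_opp. apply Cc_mul; auto. apply Cc_inv. apply Cc_mul; auto.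
  rewrite Cnorm_mul. apply Rmult_lt_0_compat; auto.
Qed.

Lemma Gd_bound x : Cgood (Qf x) ->
  Cnorm (Gd x) <= Cnorm (d2Qf x) / (8 * Cnorm (Qf x) * sqrt (Cnorm (Qf x))) +
     3 / 16 * (Cnorm (dQf x) * Cnorm (dQf x)) / (Cnorm (Qf x) * Cnorm (Qf x) * sqrt (Cnorm (Qf x))).
Proof.
  intro G. pose proof (good_pos _ G) as Hq. set (q := Cnorm (Qf x)) in *.
  pose proof (sqrt_lt_R0 _ Hq) as Hs. set (sg := sqrt q) in *.
  assert (Hss : sg * sg = q) by (apply sqrt_sqrt; lra).
  set (n1 := Cnorm (dQf x)). set (n2 := Cnorm (d2Qf x)).
  assert (Hn1 : 0 <= n1) by apply Cnorm_ge0.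
  assert (HWn : Cnorm (Wf x) = 8 * q * sg).
  { unfold Wf. rewrite Cnorm_mul, Cnorm_RtoC, norm_pow32 by auto. rewrite Rabs_pos_eq by lra. fold q sg. ring. }
  assert (HP : Cnorm (P32d x) <= 3 / 2 * n1 * sg).
  { unfold P32d. eapply Rle_trans. apply Cnorm_add.
    rewrite !Cnorm_mul, Cnorm_div by (apply twoS_pos; auto).
    rewrite Cnorm_mul, Cnorm_RtoC, Cnorm_Csq by auto. rewrite Rabs_pos_eq by lra. fold q sg n1.
    right. rewrite <- Hss. field. lra. }
  assert (HdW : Cnorm (dWf x) <= 12 * n1 * sg).
  { unfold dWf. eapply Rle_trans. apply Cnorm_add. rewrite !Cnorm_mul, Cnorm_RtoC.
    replace (Cnorm (0,0)) with 0 by (symmetry; apply Cnorm_unique; simpl; lra).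
    rewrite Rabs_pos_eq by lra. lra. }
  unfold Gd. eapply Rle_trans. apply Cnorm_add.
  rewrite !Cnorm_mul, Cnorm_opp, Cnorm_mul, !Cnorm_inv.
  2: { rewrite Cnorm_mul. apply Rmult_lt_0_compat; apply Wf_pos; auto. }
  2: apply Wf_pos; auto.
  rewrite Cnorm_mul, HWn. fold n1 n2.
  assert (0 < q * sg) by (apply Rmult_lt_0_compat; auto).
  assert (n1 * (Cnorm (dWf x) * / (8 * q * sg * (8 * q * sg))) <=
          n1 * (12 * n1 * sg * / (8 * q * sg * (8 * q * sg)))).
  { apply Rmult_le_compat_l; auto. apply Rmult_le_compat_r; auto.
    left; apply Rinv_0_lt_compat. nra. }
  assert (E1 : n1 * (12 * n1 * sg * / (8 * q * sg * (8 * q * sg))) = 3 / 16 * (n1 * n1) / (q * q * sg))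
    by (field; lra).
  assert (E2 : n2 * / (8 * q * sg) = n2 / (8 * q * sg)) by (unfold Rdiv; ring).
  lra.
Qed.

Definition ss (dg : R -> Cx) (j k : nat) (x : R) : Cx :=
  let g := gg x in
  let h := hh x in
  let gp := dg x in
  let den := Cadd (RtoC 1) (Cmul g g) in
  match j, k with
  | 1%nat, 1%nat => Cdiv (Csub (Cmul h g) (Cmul gp g)) den
  | 1%nat, 2%nat => Cdiv (Cadd (Copp (Cmul h (Cmul g g))) gp) den
  | 2%nat, 1%nat => Cdiv (Csub (Copp (Cmul h (Cmul g g))) gp) den
  | _, _ => Cdiv (Csub (Copp (Cmul h g)) (Cmul gp g)) den
  end.

End Gen.

Lemma sfun_ss m a lam dg j k x :
  sfun m a lam dg j k x = ss (Qfun m a lam) (dQfun m a) dg j k x.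
Proof. reflexivity. Qed.

Definition sexpr (g h gp : Cx) (j k : nat) : Cx :=
  let den := Cadd (RtoC 1) (Cmul g g) in
  match j, k with
  | 1%nat, 1%nat => Cdiv (Csub (Cmul h g) (Cmul gp g)) den
  | 1%nat, 2%nat => Cdiv (Cadd (Copp (Cmul h (Cmul g g))) gp) den
  | 2%nat, 1%nat => Cdiv (Csub (Copp (Cmul h (Cmul g g))) gp) den
  | _, _ => Cdiv (Csub (Copp (Cmul h g)) (Cmul gp g)) den
  end.

Lemma ss_sexpr Qf dQf dg j k x : ss Qf dQf dg j k x = sexpr (gg Qf dQf x) (hh Qf dQf x) (dg x) j k.
Proof. reflexivity. Qed.

Lemma den_bound g : Cnorm g <= 1 / 2 -> 3 / 4 <= Cnorm (Cadd (RtoC 1) (Cmul g g)).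
Proof.
  intro H. pose proof (Cnorm_add_ge (RtoC 1) (Cmul g g)). rewrite Cnorm_RtoC, Cnorm_mul in H0.
  rewrite Rabs_pos_eq in H0 by lra. pose proof (Cnorm_ge0 g). nra.
Qed.

Lemma sexpr_bound g h gp j k : (j = 1 \/ j = 2)%nat -> (k = 1 \/ k = 2)%nat -> Cnorm g <= 1 / 2 ->
  Cnorm (sexpr g h gp j k) <= 4 / 3 * (Cnorm h * Cnorm g + Cnorm gp).
Proof.
  intros Hj Hk Hg. pose proof (den_bound g Hg) as Hd.
  pose proof (Cnorm_ge0 g). pose proof (Cnorm_ge0 h). pose proof (Cnorm_ge0 gp).
  assert (Hhg : 0 <= Cnorm h * Cnorm g) by (apply Rmult_le_pos; auto).
  assert (Hgg : Cnorm h * (Cnorm g * Cnorm g) <= Cnorm h * Cnorm g).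
  { rewrite <- Rmult_assoc. replace (Cnorm h * Cnorm g) with (Cnorm h * Cnorm g * 1) at 2 by ring.
    apply Rmult_le_compat_l; auto. lra. }
  assert (Hpg : Cnorm gp * Cnorm g <= Cnorm gp) by nra.
  assert (HN : forall N, Cnorm N <= Cnorm h * Cnorm g + Cnorm gp ->
     Cnorm (Cdiv N (Cadd (RtoC 1) (Cmul g g))) <= 4 / 3 * (Cnorm h * Cnorm g + Cnorm gp)).
  { intros N HNb. rewrite Cnorm_div by lra.
    apply Rle_trans with (Cnorm N / (3/4)).
    unfold Rdiv. apply Rmult_le_compat_l. apply Cnorm_ge0. apply Rinv_le_contravar; lra.
    unfold Rdiv. lra. }
  unfold sexpr. destruct Hj as [-> | ->]; destruct Hk as [-> | ->]; apply HN.
  - eapply Rle_trans. apply Cnorm_sub. rewrite !Cnorm_mul. lra.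
  - eapply Rle_trans. apply Cnorm_add. rewrite Cnorm_opp, !Cnorm_mul. lra.
  - eapply Rle_trans. apply Cnorm_sub. rewrite Cnorm_opp, !Cnorm_mul. lra.
  - eapply Rle_trans. apply Cnorm_sub. rewrite Cnorm_opp, !Cnorm_mul. lra.
Qed.

Lemma sexpr_cont (g h gp : R -> Cx) j k x : Ccont g x -> Ccont h x -> Ccont gp x ->
  Cnorm (g x) <= 1 / 2 -> Ccont (fun t => sexpr (g t) (h t) (gp t) j k) x.
Proof.
  intros Cg Ch Cp Hg. pose proof (den_bound _ Hg).
  assert (Cden : Ccont (fun t => Cadd (RtoC 1) (Cmul (g t) (g t))) x).
  { apply Cc_add. apply Cc_const. apply Cc_mul; auto. }
  unfold sexpr.
  destruct j as [|[|[|j]]]; try destruct k as [|[|[|k]]];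
  apply Cc_div; auto; try lra;
  repeat first [apply Cc_sub | apply Cc_add | apply Cc_opp | apply Cc_mul]; auto.
Qed.

Lemma Fder (C X x : R) : 0 < X ->
  derivable_pt_lim (fun t => C * (atan (t / X) / X)) x (C / (X * X + x * x)).
Proof.
  intro HX.
  assert (H1 : derivable_pt_lim (fun t => t / X) x (/ X)).
  { eapply dlim_eq. apply (dl_div (fun t => t) (fun _ => X)).
    apply derivable_pt_lim_id. apply dl_const. lra. field. lra. }
  assert (H2 : derivable_pt_lim (fun t => atan (t / X)) x (/ (1 + (x / X) ^ 2) * / X)).
  { apply (derivable_pt_lim_comp (fun t => t / X) atan). auto. apply derivable_pt_lim_atan. }
  assert (HX0 : X <> 0) by lra.
  pose proof (dl_div (fun t => atan (t / X)) (fun _ => X) x _ 0 H2 (dl_const X x) HX0) as H3.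
  pose proof (dl_mult (fun _ => C) _ x 0 _ (dl_const C x) H3) as H4.
  eapply dlim_eq. exact H4. simpl. field. repeat split; intro; nra.
Qed.

Lemma integral_bound (f : R -> R) (C X b : R) (pr : Riemann_integrable f 0 b) :
  0 < X -> 0 <= b -> 0 <= C -> (forall x, 0 < x < b -> f x <= C / (X * X + x * x)) ->
  RiemannInt pr <= C * (PI / 2) / X.
Proof.
  intros HX Hb HC Hf.
  set (F := fun t => C * (atan (t / X) / X)).
  set (dF := fun x => exist (fun l => derivable_pt_abs F x l) (C / (X * X + x * x)) (Fder C X x HX) : derivable_pt F x).
  assert (Hc : continuity (derive F dF)).
  { intro x. unfold derive, derive_pt, dF. simpl. apply cp_div. apply cp_const.
    apply cp_plus. apply cp_const. apply cp_mult; apply derivable_continuous_pt; apply derivable_id.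
    nra. }
  set (F1 := @mkC1 F dF Hc).
  pose proof (RiemannInt_P32 F1 0 b) as prg.
  assert (Hle : RiemannInt pr <= RiemannInt prg).
  { apply RiemannInt_P19; auto. }
  rewrite (FTC_Riemann F1 prg) in Hle. simpl in Hle. unfold F in Hle.
  replace (0 / X) with 0 in Hle by (field; lra). rewrite atan_0 in Hle.
  pose proof (atan_bound (b / X)).
  assert (C * (atan (b / X) / X) <= C * (PI / 2) / X).
  { unfold Rdiv. rewrite <- Rmult_assoc. rewrite Rmult_assoc. rewrite (Rmult_assoc C).
    apply Rmult_le_compat_l; auto. apply Rmult_le_compat_r. left; apply Rinv_0_lt_compat; auto. lra. }
  lra.
Qed.

Lemma g_small (m : nat) (x X q sg n1 kk B1 : R) :
  (1 <= m)%nat -> 0 <= x -> 1 <= X -> 0 < kk -> 0 < sg -> sg * sg = q -> 0 <= B1 ->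
  kk * (x ^ m + X ^ m) <= q -> n1 <= B1 * (1 + x) ^ (m - 1) ->
  2 * (B1 * 2 ^ (m - 1) / (8 * kk)) <= sg ->
  n1 / (8 * q * sg) <= 1 / 2.
Proof.
  intros Hm Hx HX Hkk Hsg Hq HB1 HD Hn1 Hg.
  set (nu0 := nu x X).
  pose proof (nu_ge1 x X HX) as Hnu1. fold nu0 in Hnu1.
  pose proof (nu_pow x X m Hx HX) as Hnum. fold nu0 in Hnum.
  pose proof (pow_1px_nu x X Hx HX (m - 1)) as Hp. fold nu0 in Hp.
  assert (Hnn : nu0 ^ (m - 1) <= nu0 ^ m) by (apply Rle_pow; auto; lia).
  assert (Hq0 : 0 < q) by nra.
  assert (H2 : 0 < 2 ^ (m - 1)) by (apply pow_lt; lra).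
  assert (Hn1' : n1 <= B1 * 2 ^ (m - 1) * (q / kk)).
  { eapply Rle_trans. apply Hn1. rewrite Rmult_assoc. apply Rmult_le_compat_l; auto.
    eapply Rle_trans. apply Hp. apply Rmult_le_compat_l. lra.
    eapply Rle_trans. apply Hnn. apply Rmult_le_reg_l with kk; auto.
    replace (kk * (q / kk)) with q by (field; lra). nra. }
  apply Rle_trans with ((B1 * 2 ^ (m - 1) * (q / kk)) / (8 * q * sg)).
  { unfold Rdiv at 1 3. apply Rmult_le_compat_r; auto. left; apply Rinv_0_lt_compat. nra. }
  replace (B1 * 2 ^ (m - 1) * (q / kk) / (8 * q * sg)) with ((B1 * 2 ^ (m - 1) / (8 * kk)) / sg)
    by (field; repeat split; lra).
  apply Rmult_le_reg_r with sg; auto. replace (B1 * 2 ^ (m - 1) / (8 * kk) / sg * sg) with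
    (B1 * 2 ^ (m - 1) / (8 * kk)) by (field; lra). lra.
Qed.

Lemma s_combine (q sg n1 n2 nG : R) : 0 < q -> 0 < sg -> 0 <= n1 -> 0 <= n2 ->
  nG <= n2 / (8 * q * sg) + 3 / 16 * (n1 * n1) / (q * q * sg) ->
  4 / 3 * (n1 / (4 * q) * (n1 / (8 * q * sg)) + nG) <= n2 / (q * sg) + n1 * n1 / (q * q * sg).
Proof.
  intros Hq Hs H1 H2 HG.
  assert (E : 4 / 3 * (n1 / (4 * q) * (n1 / (8 * q * sg)) + (n2 / (8 * q * sg) + 3 / 16 * (n1 * n1) / (q * q * sg)))
     = n2 / (6 * (q * sg)) + 7 / 24 * (n1 * n1 / (q * q * sg))) by (field; lra).
  assert (0 <= n2 / (q * sg)) by (apply Rmult_le_pos; auto; left; apply Rinv_0_lt_compat; nra).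
  assert (0 <= n1 * n1 / (q * q * sg)).
  { apply Rmult_le_pos. nra. left; apply Rinv_0_lt_compat. apply Rmult_lt_0_compat; nra. }
  assert (n2 / (6 * (q * sg)) = / 6 * (n2 / (q * sg))) by (field; lra).
  lra.
Qed.

Theorem mainTheorem8 (m : nat) (hm : (3 <= m)%nat) (delta : R)
  (hd0 : 0 < delta) (hd1 : delta <= PI / (INR m + 2)) (M : R) :
  exists Cst R0 : R, 0 < R0 /\
  forall (a : nat -> Cx) (lam : Cx),
    (forall i : nat, (1 <= i <= m)%nat -> Cnorm (a i) <= M) ->
    R0 <= Cnorm lam ->
    Rabs (Carg lam) <= PI - delta ->
    (exists dg : R -> Cx, forall x, 0 <= x -> has_Cderiv (gfun m a lam) x (dg x)) /\
    (forall dg : R -> Cx, (forall x, 0 <= x -> has_Cderiv (gfun m a lam) x (dg x)) ->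
     forall j k : nat, (j = 1%nat \/ j = 2%nat) -> (k = 1%nat \/ k = 2%nat) ->
     forall b : R, 0 <= b ->
     exists pr : Riemann_integrable (fun x => Cnorm (sfun m a lam dg j k x)) 0 b,
       RiemannInt pr <= Cst * Rpower (Cnorm lam) (- (1 / 2 + 1 / INR m))).
Proof.
  set (Mp := Rabs M).
  assert (Hm3 : 3 <= INR m) by (replace 3 with (INR 3) by (simpl; ring); apply le_INR; lia).
  pose proof PI_RGT_0 as HPI.
  assert (Hdel : delta <= PI / 5).
  { eapply Rle_trans. apply hd1. unfold Rdiv. apply Rmult_le_compat_l. lra.
    apply Rinv_le_contravar; lra. }
  set (c := cos delta).
  assert (Hc0 : 0 < c) by (apply cos_gt_0; lra).
  assert (Hc1 : c < 1) by (rewrite <- cos_0; apply cos_decreasing_1; lra).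
  set (k := sqrt ((1 - c) / 2)). set (kk := k / 2). set (eta := (1 - c) * k / 4).
  assert (Hk : 0 < k) by (unfold k; apply sqrt_lt_R0; lra).
  assert (Hkk : 0 < kk) by (unfold kk; lra).
  assert (Heta : 0 < eta) by (unfold eta; assert (0 < (1 - c) * k) by (apply Rmult_lt_0_compat; lra); lra).
  assert (HMp : 0 <= Mp) by apply Rabs_pos.
  assert (HBP : 0 <= INR m * Mp) by (apply Rmult_le_pos; lra).
  destruct (poly_absorb (m - 1) (INR m * Mp) eta HBP Heta) as [C0 [HC00 HC0]].
  replace (S (m - 1)) with m in HC0 by lia.
  set (B1 := INR m * (1 + Mp * INR m)).
  set (B2 := INR m * INR m * (1 + Mp * INR m)).
  assert (HB1 : 0 <= B1) by (unfold B1; apply Rmult_le_pos; nra).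
  assert (HB2 : 0 <= B2) by (unfold B2; apply Rmult_le_pos; nra).
  set (gc := B1 * 2 ^ (m - 1) / (8 * kk)).
  assert (H2m : 0 < 2 ^ (m - 1)) by (apply pow_lt; lra).
  assert (Hgc : 0 <= gc) by (unfold gc; apply Rmult_le_pos; [apply Rmult_le_pos; lra |
     left; apply Rinv_0_lt_compat; lra]).
  set (K := B2 * 2 ^ (m - 1) / (kk * sqrt kk) +
            B1 * B1 * (2 ^ (m - 1) * 2 ^ (m - 1) * 2) / (kk * kk * sqrt kk)).
  assert (Hskk : 0 < sqrt kk) by (apply sqrt_lt_R0; auto).
  assert (HK : 0 <= K).
  { assert (P1 : 0 < kk * sqrt kk) by (apply Rmult_lt_0_compat; auto).
    assert (P2 : 0 < kk * kk * sqrt kk) by (apply Rmult_lt_0_compat; auto; apply Rmult_lt_0_compat; auto).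
    assert (P3 : 0 <= B2 * 2 ^ (m - 1)) by (apply Rmult_le_pos; lra).
    assert (P4 : 0 <= B1 * B1 * (2 ^ (m - 1) * 2 ^ (m - 1) * 2)) by (apply Rmult_le_pos; nra).
    unfold K. apply Rplus_le_le_0_compat; apply Rmult_le_pos; auto;
    left; apply Rinv_0_lt_compat; auto. }
  set (R0 := 1 + C0 / eta + 2 * gc * (2 * gc) / kk).
  assert (HR0a : 0 <= C0 / eta) by (apply Rmult_le_pos; auto; left; apply Rinv_0_lt_compat; auto).
  assert (HR0b : 0 <= 2 * gc * (2 * gc) / kk) by (apply Rmult_le_pos; [nra | left; apply Rinv_0_lt_compat; auto]).
  exists (K * (PI / 2)), R0. split. unfold R0; lra.
  intros a lam Ha HL Harg.
  assert (Ha' : forall i, (1 <= i <= m)%nat -> Cnorm (a i) <= Mp).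
  { intros. eapply Rle_trans. apply Ha; auto. apply Rle_abs. }
  set (L := Cnorm lam) in *.
  assert (HL1 : 1 <= L) by (unfold R0 in HL; lra).
  assert (Hu : - (L * c) <= fst lam) by (apply sector; [fold L; lra | split; lra | auto]).
  assert (HC0L : C0 <= eta * L).
  { assert (C0 / eta <= L) by (unfold R0 in HL; lra).
    apply Rmult_le_reg_r with (/ eta). apply Rinv_0_lt_compat; auto.
    replace (eta * L * / eta) with L by (field; lra). auto. }
  assert (Hm1 : (1 <= m)%nat) by lia.
  assert (HQL : forall x, 0 <= x -> Cgood (Qfun m a lam x) /\ kk * (x ^ m + L) <= Cnorm (Qfun m a lam x)).
  { intros x Hx. apply (Q_lower m a lam Mp c C0); auto. all: fold L; lra. }
  set (Qf := Qfun m a lam). set (dQf := dQfun m a). set (d2 := d2Q m a).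
  pose proof (Qfun_deriv m a lam) as HQ. pose proof (dQfun_deriv m a) as HdQ.
  pose proof (d2Q_cont m a) as Hd2.
  split.
  { exists (Gd Qf dQf d2). intros x Hx. apply (Gd_deriv Qf dQf d2 HQ HdQ x). apply HQL; auto. }
  intros dg Hdg j k0 Hj Hk0 b Hb.
  assert (Hdg' : forall x, 0 <= x -> dg x = Gd Qf dQf d2 x).
  { intros x Hx. eapply uniq_Cd. apply Hdg; auto. apply (Gd_deriv Qf dQf d2 HQ HdQ). apply HQL; auto. }
  assert (HLp : 0 < L) by lra.
  set (X := Rpower L (1 / INR m)).
  assert (HINRm : 0 < INR m) by lra.
  assert (HXm : X ^ m = L).
  { unfold X. rewrite <- Rpower_pow by (unfold Rpower; apply exp_pos).
    rewrite Rpower_mult. replace (1 / INR m * INR m) with 1 by (field; lra). apply Rpower_1; auto. }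
  assert (HX1 : 1 <= X).
  { unfold X. replace 1 with (Rpower 1 (1 / INR m)) at 1.
    apply Rle_Rpower_l. left; apply Rmult_lt_0_compat; [lra | apply Rinv_0_lt_compat; auto]. lra.
    unfold Rpower. rewrite ln_1, Rmult_0_r. apply exp_0. }
  assert (HsL : 0 < sqrt L) by (apply sqrt_lt_R0; auto).
  assert (Hpt : forall x, 0 <= x ->
     Cnorm (gg Qf dQf x) <= 1 / 2 /\
     Cnorm (ss Qf dQf (Gd Qf dQf d2) j k0 x) <= (K / sqrt L) / (X * X + x * x)).
  { intros x Hx. destruct (HQL x Hx) as [Gx Hqx].
    change (Qfun m a lam x) with (Qf x) in Gx, Hqx.
    pose proof (good_pos _ Gx) as Hq0.
    set (q := Cnorm (Qf x)) in *.
    set (sg := sqrt q).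
    assert (Hsg0 : 0 < sg) by (apply sqrt_lt_R0; auto).
    assert (Hsgq : sg * sg = q) by (apply sqrt_sqrt; lra).
    set (n1 := Cnorm (dQf x)). set (n2 := Cnorm (d2 x)).
    assert (Hn10 : 0 <= n1) by apply Cnorm_ge0.
    assert (Hn20 : 0 <= n2) by apply Cnorm_ge0.
    assert (Hn1 : n1 <= B1 * (1 + x) ^ (m - 1)) by (apply (dQ_bound m a Mp Ha' Hm1 x Hx)).
    assert (Hn2 : n2 <= B2 * (1 + x) ^ (m - 2)) by (apply (d2Q_bound m a Mp Ha' Hm1 x Hx)).
    assert (HD : kk * (x ^ m + X ^ m) <= q) by (rewrite HXm; auto).
    assert (Hxm : 0 <= x ^ m) by (apply pow_le; auto).
    assert (Hsgc : 2 * gc <= sg).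
    { assert (2 * gc * (2 * gc) <= sg * sg).
      { rewrite Hsgq. assert (2 * gc * (2 * gc) / kk <= L) by (unfold R0 in HL; lra).
        apply Rle_trans with (kk * L).
        { apply Rmult_le_reg_r with (/ kk). apply Rinv_0_lt_compat; auto.
          replace (kk * L * / kk) with L by (field; lra). auto. }
        nra. }
      nra. }
    assert (Hgn : Cnorm (gg Qf dQf x) = n1 / (8 * q * sg)).
    { unfold gg. rewrite Cnorm_div. 2: apply (Wf_pos Qf x Gx).
      rewrite Cnorm_mul, Cnorm_RtoC, norm_pow32 by auto. rewrite Rabs_pos_eq by lra.
      fold q sg n1. f_equal. ring. }
    assert (Hhn : Cnorm (hh Qf dQf x) = n1 / (4 * q)).
    { unfold hh. rewrite Cnorm_div. rewrite Cnorm_mul, Cnorm_RtoC, Rabs_pos_eq by lra. auto.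
      rewrite Cnorm_mul, Cnorm_RtoC, Rabs_pos_eq by lra. fold q. lra. }
    assert (Hgs : Cnorm (gg Qf dQf x) <= 1 / 2).
    { rewrite Hgn. apply (g_small m x X q sg n1 kk B1); auto. }
    split; auto.
    rewrite ss_sexpr. eapply Rle_trans. apply sexpr_bound; auto.
    rewrite Hgn, Hhn.
    eapply Rle_trans. apply (s_combine q sg n1 n2); auto.
    apply (Gd_bound Qf dQf d2 x Gx).
    assert (Hfin := final_ineq m x X L q sg n1 n2 kk B1 B2 ltac:(lia) Hx HX1 (eq_sym HXm) Hkk Hsg0 Hsgq
       ltac:(rewrite <- HXm; auto) Hn10 Hn1 Hn20 Hn2).
    fold K in Hfin.
    assert (HW : 0 < X * X + x * x) by nra.
    set (A := n2 / (q * sg) + n1 * n1 / (q * q * sg)) in *.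
    apply Rmult_le_reg_r with (sqrt L * (X * X + x * x)). apply Rmult_lt_0_compat; auto.
    replace (K / sqrt L / (X * X + x * x) * (sqrt L * (X * X + x * x))) with K by (field; lra).
    auto. }
  set (E := fun y => Cnorm (ss Qf dQf (Gd Qf dQf d2) j k0 (Rabs y))).
  assert (HEc : forall y, 0 <= y <= b -> continuity_pt E y).
  { intros y Hy. unfold E.
    apply (continuity_pt_comp Rabs (fun t => Cnorm (ss Qf dQf (Gd Qf dQf d2) j k0 t))).
    apply Rcontinuity_abs. rewrite Rabs_pos_eq by lra. apply Cc_norm.
    destruct (HQL y ltac:(lra)) as [Gy _].
    change (Ccont (fun t => sexpr (gg Qf dQf t) (hh Qf dQf t) (Gd Qf dQf d2 t) j k0) y).
    apply sexpr_cont.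
    apply (gg_cont Qf dQf d2 HQ HdQ y Gy).
    apply (hh_cont Qf dQf d2 HQ HdQ y (good_pos _ Gy)).
    apply (Gd_cont Qf dQf d2 HQ HdQ Hd2 y Gy).
    apply Hpt; lra. }
  pose proof (continuity_implies_RiemannInt Hb HEc) as prE.
  assert (pr : Riemann_integrable (fun x => Cnorm (sfun m a lam dg j k0 x)) 0 b).
  { refine (@Riemann_integrable_ext E (fun x => Cnorm (sfun m a lam dg j k0 x)) 0 b _ prE). intros y Hy.
    rewrite Rmin_left, Rmax_right in Hy by lra. unfold E. rewrite Rabs_pos_eq by lra.
    rewrite sfun_ss, !ss_sexpr. rewrite Hdg' by lra. reflexivity. }
  exists pr.
  assert (HX0 : 0 < X) by lra.
  eapply Rle_trans. apply (integral_bound _ (K / sqrt L) X b pr); auto.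
  { apply Rmult_le_pos; auto. left; apply Rinv_0_lt_compat; auto. }
  { intros x Hx. rewrite sfun_ss, ss_sexpr, Hdg' by lra. rewrite <- ss_sexpr. apply Hpt. lra. }
  right.
  rewrite Rpower_Ropp, Rpower_plus.
  replace (1 / 2) with (/ 2) by field. rewrite Rpower_sqrt by auto. fold X.
  field. lra.
Qed.
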